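(* Let $\nabla$ be a module connection on $M$. The algebra map $\mathsf K_\nabla:\mathsf S_A(M)\to\mathsf T(\mathsf S_A(M))$ given on generators by $\mathsf K_\nabla(a)=a$ and $\mathsf K_\nabla(m)=\mathsf d(m)-U(\nabla(m))$ (explicitly, if $\nabla(m)=\sum_i\mathsf d(a_i)\otimes m_i$ then $\mathsf K_\nabla(m)=\mathsf d(m)-\sum_i m_i\,\mathsf d(a_i)$) is an effective vertical connection on $\mathsf q_M$.
   Context: Fix a commutative ring $R$, a commutative $R$-algebra $A$ and an $A$-module $M$. ''Algebra'' means commutative $R$-algebra and ''algebra map'' means $R$-algebra homomorphism. $\Omega(A)$ is the $A$-module of Kähler differentials of $A$ over $R$, with universal derivation $\mathsf d:A\to\Omega(A)$. A (module) connection on $M$ is an $R$-linear map $\nabla:M\to\Omega(A)\otimes_AM$ such that $\nabla(am)=a\nabla(m)+\mathsf d(a)\otimes_Am$ for all $a\in A$, $m\in M$. Tangent algebras: for an algebra $B$, $\mathsf T(B):=\mathrm{Sym}_B(\Omega(B))$, i.e. the $B$-algebra generated by symbols $\mathsf d(b)$ ($b\in B$) subject to $\mathsf d(b+b')=\mathsf d(b)+\mathsf d(b')$, $\mathsf d(bb')=b\,\mathsf d(b')+b'\,\mathsf d(b)$, $\mathsf d(r1)=0$ ($r\in R$). An algebra map out of $\mathsf T(B)$ is determined by its values on the generators $b$, $\mathsf d(b)$. Write $\mathsf T^2(B)=\mathsf T(\mathsf T(B))$ and denote the universal derivation $\mathsf T(B)\to\mathsf T^2(B)$ by $\mathsf d'$;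 so $\mathsf T^2(B)$ is generated over $B$ by $\mathsf d(b),\mathsf d'(b),\mathsf d'\mathsf d(b)$. For an algebra map $h:X\to Y$, $\mathsf T(h):\mathsf T(X)\to\mathsf T(Y)$ sends $x\mapsto h(x)$ and $\delta_X(x)\mapsto\delta_Y(h(x))$, where $\delta$ denotes the relevant universal derivation ($\mathsf d$ for $B\to\mathsf T(B)$, $\mathsf d'$ for $\mathsf T(B)\to\mathsf T^2(B)$). Algebra maps defined on generators $b\in B$: $\mathsf p_B:B\to\mathsf T(B)$ the inclusion; $0_B:\mathsf T(B)\to B$, $b\mapsto b$, $\mathsf d(b)\mapsto 0$; $\ell_B:\mathsf T^2(B)\to\mathsf T(B)$, $b\mapsto b$, $\mathsf d(b)\mapsto 0$, $\mathsf d'(b)\mapsto0$, $\mathsf d'\mathsf d(b)\mapsto\mathsf d(b)$; $\mathsf c_B:\mathsf T^2(B)\to\mathsf T^2(B)$, $b\mapsto b$, $\mathsf d(b)\mapsto\mathsf d'(b)$, $\mathsf d'(b)\mapsto\mathsf d(b)$, $\mathsf d'\mathsf d(b)\mapsto\mathsf d'\mathsf d(b)$. (These are, read in algebras, the structure maps of the Rosický tangent structure on affine schemes over $R$, i.e. on the opposite of the category of commutative $R$-algebras.) Differential bundle of $M$: $\mathsf S_A(M)$ is the symmetric $A$-algebra on $M$ (generated by $a\in A$, $m\in M$). Algebra maps: $\mathsf q_M:A\to\mathsf S_A(M)$ the inclusion; $\mathsf z_M:\mathsf S_A(M)\to A$, $a\mapsto a$, $m\mapsto 0$; $\lambda_M:\mathsf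 T(\mathsf S_A(M))\to\mathsf S_A(M)$, $a\mapsto a$, $m\mapsto0$, $\mathsf d(a)\mapsto 0$, $\mathsf d(m)\mapsto m$. Let $U:\mathsf T(A)\otimes_A\mathsf S_A(M)\to\mathsf T(\mathsf S_A(M))$ be the algebra map $w\otimes v\mapsto\mathsf T(\mathsf q_M)(w)\,v$ (we regard $\Omega(A)\otimes_AM\subseteq\mathsf T(A)\otimes_A\mathsf S_A(M)$). A vertical connection on $\mathsf q_M$ is an algebra map $\mathsf K:\mathsf S_A(M)\to\mathsf T(\mathsf S_A(M))$ such that (K1) $\lambda_M\circ\mathsf K=\mathrm{id}$; (K2) $\mathsf K(a)=a$ for all $a\in A$; (K3) $\ell_{\mathsf S_A(M)}\circ\mathsf T(\mathsf K)=\mathsf K\circ\lambda_M$; (K4) $\mathsf T(\lambda_M)\circ\mathsf c_{\mathsf S_A(M)}\circ\mathsf T(\mathsf K)=\mathsf K\circ\lambda_M$. It is effective if the algebra map $\mathsf T(A)\otimes_A\mathsf S_A(M)\otimes_A\mathsf S_A(M)\to\mathsf T(\mathsf S_A(M))$, $w\otimes v\otimes u\mapsto\mathsf T(\mathsf q_M)(w)\,v\,\mathsf K(u)$, is an isomorphism. *)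

(* Defs.v *)
From HB Require Import structures.
From mathcomp Require Import all_boot all_order all_algebra.
Set Implicit Arguments. Unset Strict Implicit. Unset Printing Implicit Defensive.
Import GRing.Theory.
Local Open Scope ring_scope.

Section Defs.
Variable R : comPzRingType.

Definition is_alg_hom (B C : comAlgType R) (f : B -> C) : Prop :=
  [/\ forall x y, f (x + y) = f x + f y,
      forall x y, f (x * y) = f x * f y,
      f 1 = 1 &
      forall (r : R) x, f (r *: x) = r *: f x].

Definition is_derivation_along (B C : comAlgType R) (f d : B -> C) : Prop :=
  [/\ forall x y, d (x + y) = d x + d y,
      forall (r : R) x, d (r *: x) = r *: d x &
      forall x y, d (x * y) = f x * d y + f y * d x].

Definition uniquely {X Y : Type} (P : (X -> Y) -> Prop) : Prop :=
  (exists g, P g) /\ (forall g1 g2, P g1 -> P g2 -> forall x, g1 x = g2 x).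

(* (TB, p, d) is the tangent algebra T(B) = Sym_B(Omega(B)), with
   p = inclusion B -> T(B) and d the universal derivation:
   algebra maps T(B) -> C correspond to pairs (algebra map f, derivation along f). *)
Definition is_tangent_algebra (B TB : comAlgType R) (p d : B -> TB) : Prop :=
  [/\ is_alg_hom p, is_derivation_along p d &
      forall (C : comAlgType R) (f dl : B -> C),
        is_alg_hom f -> is_derivation_along f dl ->
        uniquely (fun g : TB -> C =>
          [/\ is_alg_hom g, forall b, g (p b) = f b & forall b, g (d b) = dl b])].

Definition is_symmetric_algebra (A : comAlgType R) (M : lmodType A)
    (S : comAlgType R) (q : A -> S) (i : M -> S) : Prop :=
  [/\ is_alg_hom q,
      forall m m', i (m + m') = i m + i m',
      forall (a : A) m, i (a *: m) = q a * i m &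
      forall (C : comAlgType R) (f : A -> C) (g : M -> C),
        is_alg_hom f -> (forall m m', g (m + m') = g m + g m') ->
        (forall (a : A) m, g (a *: m) = f a * g m) ->
        uniquely (fun h : S -> C =>
          [/\ is_alg_hom h, forall a, h (q a) = f a & forall m, h (i m) = g m])].

Definition is_Alinear (A : comAlgType R) (N1 N2 : lmodType A) (g : N1 -> N2) : Prop :=
  (forall x y, g (x + y) = g x + g y) /\ (forall (a : A) x, g (a *: x) = a *: g x).

Definition is_module_derivation (A : comAlgType R) (N : lmodType A) (d : A -> N) : Prop :=
  [/\ forall x y, d (x + y) = d x + d y,
      forall (r : R), d (r%:A) = 0 &
      forall x y, d (x * y) = x *: d y + y *: d x].

Definition is_kaehler (A : comAlgType R) (Om : lmodType A) (d : A -> Om) : Prop :=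
  is_module_derivation d /\
  forall (N : lmodType A) (dl : A -> N), is_module_derivation dl ->
    uniquely (fun g : Om -> N => is_Alinear g /\ forall a, g (d a) = dl a).

Definition is_Abilinear (A : comAlgType R) (N1 N2 N : lmodType A)
    (phi : N1 -> N2 -> N) : Prop :=
  [/\ forall x x' y, phi (x + x') y = phi x y + phi x' y,
      forall x y y', phi x (y + y') = phi x y + phi x y',
      forall (a : A) x y, phi (a *: x) y = a *: phi x y &
      forall (a : A) x y, phi x (a *: y) = a *: phi x y].

Definition is_tensor_product (A : comAlgType R) (N1 N2 T : lmodType A)
    (t : N1 -> N2 -> T) : Prop :=
  is_Abilinear t /\
  forall (N : lmodType A) (phi : N1 -> N2 -> N), is_Abilinear phi ->
    uniquely (fun g : T -> N => is_Alinear g /\ forall x y, g (t x y) = phi x y).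

(* (P, j1, j2, j3) is the tensor product of commutative A-algebras
   X1 (x)_A X2 (x)_A X3 (structure maps s1 s2 s3 : A -> Xk), i.e. the coproduct
   of A-algebras. *)
Definition is_algebra_tensor3 (A X1 X2 X3 P : comAlgType R)
    (s1 : A -> X1) (s2 : A -> X2) (s3 : A -> X3)
    (j1 : X1 -> P) (j2 : X2 -> P) (j3 : X3 -> P) : Prop :=
  [/\ is_alg_hom j1 /\ is_alg_hom j2 /\ is_alg_hom j3,
      forall a, j1 (s1 a) = j2 (s2 a),
      forall a, j2 (s2 a) = j3 (s3 a) &
      forall (C : comAlgType R) (g1 : X1 -> C) (g2 : X2 -> C) (g3 : X3 -> C),
        is_alg_hom g1 -> is_alg_hom g2 -> is_alg_hom g3 ->
        (forall a, g1 (s1 a) = g2 (s2 a)) -> (forall a, g2 (s2 a) = g3 (s3 a)) ->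
        uniquely (fun h : P -> C =>
          [/\ is_alg_hom h, forall x, h (j1 x) = g1 x,
              forall x, h (j2 x) = g2 x & forall x, h (j3 x) = g3 x])].

Definition is_module_connection (A : comAlgType R) (M Om OM : lmodType A)
    (d : A -> Om) (t : Om -> M -> OM) (nabla : M -> OM) : Prop :=
  (forall m m', nabla (m + m') = nabla m + nabla m') /\
  (forall (r : R) m, nabla (r%:A *: m) = r%:A *: nabla m) /\
  (forall (a : A) m, nabla (a *: m) = a *: nabla m + t (d a) m).

End Defs.

(* Main.v *)
Require Import Defs.
From HB Require Import structures.
From mathcomp Require Import all_boot all_order all_algebra.
Set Implicit Arguments. Unset Strict Implicit. Unset Printing Implicit Defensive.
Import GRing.Theory.
Local Open Scope ring_scope.

From mathcomp Require Import ring.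
From Stdlib Require Import ClassicalEpsilon.

Section Basics.
Variable R : comPzRingType.
Implicit Types B C D : comAlgType R.

Lemma ah0 B C (f : B -> C) : is_alg_hom f -> f 0 = 0.
Proof. by case=> fD _ _ _; apply: (@addrI _ (f 0)); rewrite -fD !addr0. Qed.
Lemma ahN B C (f : B -> C) x : is_alg_hom f -> f (- x) = - f x.
Proof. move=> H; have [fD _ _ _] := H; apply: (@addrI _ (f x)); by rewrite -fD !subrr (ah0 H). Qed.
Lemma ahB B C (f : B -> C) x y : is_alg_hom f -> f (x - y) = f x - f y.
Proof. by move=> H; have [fD _ _ _] := H; rewrite fD (ahN _ H). Qed.
Lemma ahD B C (f : B -> C) x y : is_alg_hom f -> f (x + y) = f x + f y.
Proof. by case. Qed.
Lemma ahM B C (f : B -> C) x y : is_alg_hom f -> f (x * y) = f x * f y.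
Proof. by case. Qed.
Lemma ah1 B C (f : B -> C) : is_alg_hom f -> f 1 = 1.
Proof. by case. Qed.
Lemma ahZ B C (f : B -> C) r x : is_alg_hom f -> f (r *: x) = r *: f x.
Proof. by case. Qed.
Lemma ah_comp B C D (f : B -> C) (g : C -> D) :
  is_alg_hom f -> is_alg_hom g -> is_alg_hom (fun x => g (f x)).
Proof.
move=> [fD fM f1 fZ] [gD gM g1 gZ]; split=> *; by rewrite ?fD ?gD ?fM ?gM ?f1 ?g1 ?fZ ?gZ.
Qed.
Lemma ah_id B : is_alg_hom (fun x : B => x). Proof. by split. Qed.

Lemma der0 B C (f d : B -> C) : is_derivation_along f d -> d 0 = 0.
Proof. by case=> dD _ _; apply: (@addrI _ (d 0)); rewrite -dD !addr0. Qed.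
Lemma derN B C (f d : B -> C) x : is_derivation_along f d -> d (- x) = - d x.
Proof. move=> H; have [dD _ _] := H; apply: (@addrI _ (d x)); by rewrite -dD !subrr (der0 H). Qed.
Lemma derB B C (f d : B -> C) x y : is_derivation_along f d -> d (x - y) = d x - d y.
Proof. by move=> H; have [dD _ _] := H; rewrite dD (derN _ H). Qed.
Lemma derD B C (f d : B -> C) x y : is_derivation_along f d -> d (x + y) = d x + d y.
Proof. by case. Qed.
Lemma derM B C (f d : B -> C) x y : is_derivation_along f d -> d (x * y) = f x * d y + f y * d x.
Proof. by case. Qed.
Lemma derZ B C (f d : B -> C) r x : is_derivation_along f d -> d (r *: x) = r *: d x.
Proof. by case. Qed.
Lemma der1 B C (f d : B -> C) : is_alg_hom f -> is_derivation_along f d -> d 1 = 0.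
Proof.
move=> Hf Hd; have := derM 1 1 Hd; rewrite mulr1 (ah1 Hf) mul1r.
by move=> E; apply: (@addrI _ (d 1)); rewrite addr0 -E.
Qed.
Lemma der_comp B C D (f d : B -> C) (g : C -> D) :
  is_derivation_along f d -> is_alg_hom g -> is_derivation_along (fun x => g (f x)) (fun x => g (d x)).
Proof.
move=> [dD dZ dM] [gD gM g1 gZ]; split=> *; by rewrite ?dD ?gD ?dZ ?gZ ?dM ?gD ?gM.
Qed.
Lemma der_precomp B C D (f d : C -> D) (g : B -> C) :
  is_derivation_along f d -> is_alg_hom g -> is_derivation_along (fun x => f (g x)) (fun x => d (g x)).
Proof.
move=> [dD dZ dM] [gD gM g1 gZ]; split=> *; by rewrite ?gD ?gZ ?gM ?dD ?dZ ?dM.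
Qed.
Lemma der_ext B C (f f' d : B -> C) : (forall x, f x = f' x) ->
  is_derivation_along f d -> is_derivation_along f' d.
Proof. by move=> E [dD dZ dM]; split=> // x y; rewrite dM !E. Qed.
End Basics.
Section Dual.
Variables (R : comPzRingType) (C : comAlgType R).
Record dual := Dual { dval : C * C }.
HB.instance Definition _ := [isNew for dval].
HB.instance Definition _ := [Choice of dual by <:].
Local Notation d1 x := (dval x).1.
Local Notation d2 x := (dval x).2.
Definition dzero := Dual (0, 0).
Definition dadd x y := Dual (d1 x + d1 y, d2 x + d2 y).
Definition dopp x := Dual (- d1 x, - d2 x).
Lemma deq x y : d1 x = d1 y -> d2 x = d2 y -> x = y.
Proof. by case: x y => [[a b]] [[c d]]; rewrite /= => -> ->. Qed.
Fact daddA : associative dadd. Proof. by move=> [[? ?]] [[? ?]] [[? ?]]; apply: deq; rewrite /= addrA. Qed.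
Fact daddC : commutative dadd. Proof. by move=> [[? ?]] [[? ?]]; apply: deq; rewrite /= addrC. Qed.
Fact dadd0 : left_id dzero dadd. Proof. by move=> [[? ?]]; apply: deq; rewrite /= add0r. Qed.
Fact daddN : left_inverse dzero dopp dadd. Proof. by move=> [[? ?]]; apply: deq; rewrite /= addNr. Qed.
HB.instance Definition _ := GRing.isZmodule.Build dual daddA daddC dadd0 daddN.
Definition dscale (a : R) x := Dual (a *: d1 x, a *: d2 x).
Fact dscA a b v : dscale a (dscale b v) = dscale (a * b) v.
Proof. by case: v => [[? ?]]; apply: deq; rewrite /= scalerA. Qed.
Fact dsc1 : left_id 1 dscale. Proof. by move=> [[? ?]]; apply: deq; rewrite /= scale1r. Qed.
Fact dscDr : right_distributive dscale +%R. Proof. by move=> a [[? ?]] [[? ?]]; apply: deq; rewrite /= scalerDr. Qed.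
Fact dscDl v : {morph dscale^~ v: a b / a + b}. Proof. by case: v => [[? ?]] a b; apply: deq; rewrite /= scalerDl. Qed.
HB.instance Definition _ := GRing.Zmodule_isLmodule.Build R dual dscA dsc1 dscDr dscDl.
Definition done_ : dual := Dual (1, 0).
Definition dmul (x y : dual) : dual := Dual (d1 x * d1 y, d1 x * d2 y + d2 x * d1 y).
Fact dmulA : associative dmul.
Proof. by move=> [[? ?]] [[? ?]] [[? ?]]; apply: deq; rewrite /= ?mulrA // !mulrDr !mulrDl !mulrA addrA. Qed.
Fact dmulC : commutative dmul.
Proof. move=> [[a b]] [[c d]]; apply: deq; rewrite /=; first exact: mulrC. by rewrite addrC; congr (_ + _); apply: mulrC. Qed.
Fact dmul1 : left_id done_ dmul.
Proof. by move=> [[a b]]; apply: deq; rewrite /= ?mul1r // mul0r addr0. Qed.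
Fact dmulDl : left_distributive dmul +%R.
Proof. by move=> [[a b]] [[c d]] [[e f]]; apply: deq; rewrite /= !mulrDl // addrACA. Qed.
Fact done_neq0 : done_ != 0.
Proof. apply/eqP => /(congr1 (fun x => (dval x).1)) /= /eqP; by rewrite oner_eq0. Qed.
HB.instance Definition _ := GRing.Zmodule_isComNzRing.Build dual dmulA dmulC dmul1 dmulDl done_neq0.
Fact dscaleAl (a : R) (u v : dual) : a *: (u * v) = (a *: u) * v.
Proof. by case: u v => [[? ?]] [[? ?]]; apply: deq; rewrite /= ?scalerAl // scalerDr !scalerAl. Qed.
HB.instance Definition _ := GRing.Lmodule_isLalgebra.Build R dual dscaleAl.
HB.instance Definition _ := GRing.Lalgebra_isComAlgebra.Build R dual.
Lemma dvalD (x y : dual) : dval (x + y) = (d1 x + d1 y, d2 x + d2 y). Proof. by []. Qed.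
Lemma dvalM (x y : dual) : dval (x * y) = (d1 x * d1 y, d1 x * d2 y + d2 x * d1 y). Proof. by []. Qed.
Lemma dvalZ a (x : dual) : dval (a *: x) = (a *: d1 x, a *: d2 x). Proof. by []. Qed.
Lemma dval1 : dval (1 : dual) = (1, 0). Proof. by []. Qed.

Lemma dual_ah (B : comAlgType R) (f d : B -> C) :
  is_alg_hom f -> is_derivation_along f d -> is_alg_hom (fun x => Dual (f x, d x)).
Proof.
move=> Hf Hd; split.
- by move=> x y; apply: deq; rewrite dvalD /= ?(ahD _ _ Hf) ?(derD _ _ Hd).
- move=> x y; apply: deq; rewrite dvalM /=; first exact: ahM.
  by rewrite (derM _ _ Hd) (mulrC (f y)).
- by apply: deq; rewrite dval1 /= ?(ah1 Hf) ?(der1 Hf Hd).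
- by move=> r x; apply: deq; rewrite dvalZ /= ?(ahZ _ _ Hf) ?(derZ _ _ Hd).
Qed.

Lemma dual_split (B : comAlgType R) (h : B -> dual) : is_alg_hom h ->
  is_alg_hom (fun x => d1 (h x)) /\ is_derivation_along (fun x => d1 (h x)) (fun x => d2 (h x)).
Proof.
move=> [hD hM h1 hZ]; split; split.
- by move=> x y; rewrite hD dvalD.
- by move=> x y; rewrite hM dvalM.
- by rewrite h1 dval1.
- by move=> r x; rewrite hZ dvalZ.
- by move=> x y; rewrite hD dvalD.
- by move=> r x; rewrite hZ dvalZ.
- by move=> x y; rewrite hM dvalM /= (mulrC (d2 (h x))).
Qed.
End Dual.
Section SubL.
Variables (Rg : pzRingType) (V : lmodType Rg).
Record clpred := CP { cp :> V -> Prop; cp0 : cp 0;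
  cpD : forall x y, cp x -> cp y -> cp (x + y);
  cpZ : forall a x, cp x -> cp (a *: x) }.
Definition pb (Q : clpred) : pred V :=
  fun x => if excluded_middle_informative (Q x) then true else false.
Lemma pbP (Q : clpred) x : pb Q x <-> Q x.
Proof. by rewrite /pb; case: excluded_middle_informative. Qed.
Fact pb_closed (Q : clpred) : GRing.subsemimod_closed (pb Q).
Proof.
split; first split.
- by apply/pbP; apply: cp0.
- by move=> x y /pbP Hx /pbP Hy; apply/pbP; apply: cpD.
- by move=> a x /pbP Hx; apply/pbP; apply: cpZ.
Qed.
HB.instance Definition _ (Q : clpred) := GRing.isSubmodClosed.Build Rg V (pb Q) (pb_closed Q).
Record subV (Q : clpred) := SubV { sv : V; svP : sv \in pb Q }.
HB.instance Definition _ Q := [isSub for @sv Q].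
HB.instance Definition _ Q := [Choice of subV Q by <:].
HB.instance Definition _ Q := [SubChoice_isSubLmodule of subV Q by <:].
Lemma subV_add Q (x y : subV Q) : val (x + y) = val x + val y. Proof. by []. Qed.
Lemma subV_scale Q a (x : subV Q) : val (a *: x) = a *: val x. Proof. by []. Qed.
End SubL.

Section ModC.
Variables (R : comPzRingType) (A C : comAlgType R).
Record ahom := AHom { ahf :> A -> C; ahP : is_alg_hom ahf }.
Definition modC (h : ahom) : Type := C.
HB.instance Definition _ h := GRing.Zmodule.on (modC h).
Definition mscale (h : ahom) (a : A) (x : modC h) : modC h := (h a * x : C).
Arguments mscale : clear implicits.
Fact msA h a b v : mscale h a (mscale h b v) = mscale h (a * b) v.
Proof. by rewrite /mscale (ahM _ _ (ahP h)) mulrA. Qed.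
Fact ms1 h : left_id 1 (mscale h). Proof. by move=> x; rewrite /mscale (ah1 (ahP h)) mul1r. Qed.
Fact msDr h : right_distributive (mscale h) +%R. Proof. by move=> a x y; rewrite /mscale mulrDr. Qed.
Fact msDl h v : {morph (mscale h)^~ v: a b / a + b}.
Proof. by move=> a b; rewrite /mscale (ahD _ _ (ahP h)) mulrDl. Qed.
HB.instance Definition _ h := GRing.Zmodule_isLmodule.Build A (modC h) (@msA h) (@ms1 h) (@msDr h) (@msDl h).
Lemma modCZ h a (x : modC h) : a *: x = (h a * (x : C) : C). Proof. by []. Qed.
End ModC.

Section Tangent.
Variables (R : comPzRingType) (B TB : comAlgType R) (p d : B -> TB).
Hypothesis HT : is_tangent_algebra p d.
Lemma tan_ext (C : comAlgType R) (g1 g2 : TB -> C) : is_alg_hom g1 -> is_alg_hom g2 ->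
  (forall b, g1 (p b) = g2 (p b)) -> (forall b, g1 (d b) = g2 (d b)) -> forall x, g1 x = g2 x.
Proof.
move=> H1 H2 Ep Ed; case: HT => Hp Hd U.
have [_ Un] := U C (fun b => g1 (p b)) (fun b => g1 (d b)) (ah_comp Hp H1) (der_comp Hd H1).
by apply: Un; split.
Qed.
End Tangent.

Section Sym.
Variables (R : comPzRingType) (A : comAlgType R) (M : lmodType A) (S : comAlgType R)
  (qM : A -> S) (iM : M -> S).
Hypothesis HS : is_symmetric_algebra qM iM.

Lemma sym_ext (C : comAlgType R) (g1 g2 : S -> C) : is_alg_hom g1 -> is_alg_hom g2 ->
  (forall a, g1 (qM a) = g2 (qM a)) -> (forall m, g1 (iM m) = g2 (iM m)) -> forall x, g1 x = g2 x.
Proof.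
move=> H1 H2 Eq Ei; case: HS => Hq iD iZ U.
have E1 : forall m m', g1 (iM (m + m')) = g1 (iM m) + g1 (iM m') by move=> m m'; rewrite iD (ahD _ _ H1).
have E2 : forall a m, g1 (iM (a *: m)) = g1 (qM a) * g1 (iM m) by move=> a m; rewrite iZ (ahM _ _ H1).
have [_ Un] := U C (fun a => g1 (qM a)) (fun m => g1 (iM m)) (ah_comp Hq H1) E1 E2.
by apply: Un; split.
Qed.

Lemma sym_der_ext (C : comAlgType R) (f D1 D2 : S -> C) : is_alg_hom f ->
  is_derivation_along f D1 -> is_derivation_along f D2 ->
  (forall a, D1 (qM a) = D2 (qM a)) -> (forall m, D1 (iM m) = D2 (iM m)) -> forall x, D1 x = D2 x.
Proof.
move=> Hf H1 H2 Eq Ei x.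
have := sym_ext (dual_ah Hf H1) (dual_ah Hf H2) _ _ x.
by move=> /(_ _ _) /(congr1 (fun z => (dval z).2)) /=; apply=> [a|m]; rewrite ?Eq ?Ei.
Qed.

Lemma sym_der_exists (C : comAlgType R) (F delta : A -> C) (mu0 mu1 : M -> C) :
  is_alg_hom F -> is_derivation_along F delta ->
  (forall m m', mu0 (m + m') = mu0 m + mu0 m') ->
  (forall m m', mu1 (m + m') = mu1 m + mu1 m') ->
  (forall a m, mu0 (a *: m) = F a * mu0 m) ->
  (forall a m, mu1 (a *: m) = F a * mu1 m + delta a * mu0 m) ->
  exists h D : S -> C, [/\ is_alg_hom h, is_derivation_along h D,
    (forall a, h (qM a) = F a) /\ (forall a, D (qM a) = delta a),
    forall m, h (iM m) = mu0 m & forall m, D (iM m) = mu1 m].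
Proof.
move=> HF Hd D0 D1 Z0 Z1; case: HS => Hq iD iZ U.
have E1 : forall m m', Dual (mu0 (m + m'), mu1 (m + m')) = Dual (mu0 m, mu1 m) + Dual (mu0 m', mu1 m').
  by move=> m m'; apply: deq; rewrite dvalD /= ?D0 ?D1.
have E2 : forall a m, Dual (mu0 (a *: m), mu1 (a *: m)) = Dual (F a, delta a) * Dual (mu0 m, mu1 m).
  by move=> a m; apply: deq; rewrite dvalM /= ?Z0 ?Z1 // mulrC.
have [[h [Hh Eq Ei]] _] := U (dual C) (fun a => Dual (F a, delta a)) (fun m => Dual (mu0 m, mu1 m))
  (dual_ah HF Hd) E1 E2.
have [Hh1 Hh2] := dual_split Hh.
exists (fun x => (dval (h x)).1), (fun x => (dval (h x)).2); split=> //.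
- by split=> a; rewrite Eq.
- by move=> m; rewrite Ei.
- by move=> m; rewrite Ei.
Qed.
End Sym.

Section KT.
Variables (R : comPzRingType) (A : comAlgType R) (M Om OM : lmodType A)
  (dOm : A -> Om) (tns : Om -> M -> OM).
Hypotheses (HOm : is_kaehler dOm) (Htns : is_tensor_product tns).

Inductive genOm : Om -> Prop :=
| gO0 : genOm 0
| gOD x y : genOm x -> genOm y -> genOm (x + y)
| gOZ b a : genOm (b *: dOm a).
Lemma genOmZ c x : genOm x -> genOm (c *: x).
Proof.
move=> Hx; elim: Hx => [|u v _ Hu _ Hv|b a]; first by rewrite scaler0; exact: gO0.
- by rewrite scalerDr; exact: gOD.
- by rewrite scalerA; exact: gOZ.
Qed.
Definition QOm : clpred Om := CP gO0 gOD genOmZ.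

Lemma genOm_all z : genOm z.
Proof.
case: HOm => Hd HU.
have Hg a : dOm a \in pb QOm by apply/pbP => /=; rewrite -[dOm a]scale1r; exact: gOZ.
pose d' a : subV QOm := SubV (Hg a).
have Hd' : is_module_derivation d'.
  case: Hd => dD d0 dM; split.
  - by move=> x y; apply: val_inj; rewrite /= dD.
  - by move=> r; apply: val_inj; rewrite /= d0.
  - by move=> x y; apply: val_inj; rewrite /= dM.
have [[g [[gD gZ] gd]] _] := HU _ d' Hd'.
have [_ Un] := HU _ dOm Hd.
have E : forall x, val (g x) = x.
  apply: Un; split => //.
  - by split=> [u v|c u]; rewrite ?gD ?gZ.
  - by move=> a; rewrite gd.
by rewrite -(E z); apply/(pbP QOm); exact: (svP (g z)).
Qed.

Lemma tns0 m : tns 0 m = 0.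
Proof. case: Htns => [[tD _ _ _] _]; apply: (@addrI _ (tns 0 m)); by rewrite -tD !addr0. Qed.
Lemma tnsDl x x' m : tns (x + x') m = tns x m + tns x' m. Proof. by case: Htns => [[]]. Qed.
Lemma tnsZl a x m : tns (a *: x) m = a *: tns x m. Proof. by case: Htns => [[]]. Qed.

Inductive genOM : OM -> Prop :=
| gM0 : genOM 0
| gMD x y : genOM x -> genOM y -> genOM (x + y)
| gMT b a m : genOM (tns (b *: dOm a) m).
Lemma genOMZ c x : genOM x -> genOM (c *: x).
Proof.
move=> Hx; elim: Hx => [|u v _ Hu _ Hv|b a m]; first by rewrite scaler0; exact: gM0.
- by rewrite scalerDr; exact: gMD.
- by rewrite -tnsZl scalerA; exact: gMT.
Qed.
Definition QOM : clpred OM := CP gM0 gMD genOMZ.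

Lemma genOM_tns x m : genOM (tns x m).
Proof.
elim: (genOm_all x) => [|y z _ Hy _ Hz|b a]; first by rewrite tns0; exact: gM0.
- by rewrite tnsDl; exact: gMD.
- exact: gMT.
Qed.

Lemma genOM_all z : genOM z.
Proof.
case: Htns => Hb HU.
have Hg y m : tns y m \in pb QOM by apply/pbP; exact: genOM_tns.
pose t' y m : subV QOM := SubV (Hg y m).
have Ht' : is_Abilinear t'.
  case: Hb => b1 b2 b3 b4; split.
  - by move=> *; apply: val_inj; rewrite /= b1.
  - by move=> *; apply: val_inj; rewrite /= b2.
  - by move=> *; apply: val_inj; rewrite /= b3.
  - by move=> *; apply: val_inj; rewrite /= b4.
have [[g [[gD gZ] gt]] _] := HU _ t' Ht'.
have [_ Un] := HU _ tns Hb.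
have E : forall x, val (g x) = x.
  apply: Un; split => //.
  - by split=> [u v|c u]; rewrite ?gD ?gZ.
  - by move=> y m; rewrite gt.
by rewrite -(E z); apply/(pbP QOM); exact: (svP (g z)).
Qed.

Section Constr.
Variables (C : comAlgType R) (h : ahom A C) (delta : A -> C) (mu : M -> C).
Hypotheses (Hdel : is_derivation_along h delta)
  (muD : forall m m', mu (m + m') = mu m + mu m')
  (muZ : forall a m, mu (a *: m) = h a * mu m).

Lemma Uconstr : exists U' : OM -> C, [/\ forall x y, U' (x + y) = U' x + U' y,
  forall a x, U' (a *: x) = h a * U' x &
  forall b a m, U' (tns (b *: dOm a) m) = h b * (delta a * mu m)].
Proof.
case: HOm => _ HU.
pose dm m (a : A) : modC h := (delta a * mu m : C).
have Hdm m : is_module_derivation (dm m).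
  split.
  - by move=> x y; rewrite /dm (derD _ _ Hdel) mulrDl.
  - move=> r; rewrite /dm -[r%:A]/(r *: 1) (derZ _ _ Hdel) (der1 (ahP h) Hdel) scaler0 mul0r //.
  - move=> x y; rewrite /dm (derM _ _ Hdel) !modCZ mulrDl -!mulrA //.
have Hex m := (HU _ (dm m) (Hdm m)).1.
pose G m := proj1_sig (constructive_indefinite_description _ (Hex m)).
have HG m : is_Alinear (G m) /\ forall a, G m (dOm a) = dm m a :=
  proj2_sig (constructive_indefinite_description _ (Hex m)).
have Hphi : is_Abilinear (fun x m => G m x).
  split.
  - by move=> x x' m; case: (HG m) => -[]. 
  - move=> x m m'.
    apply: ((HU _ _ (Hdm (m + m'))).2 (G (m + m')) (fun y => G m y + G m' y)); first exact: HG.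
    split.
    + split=> [y z|a y]; case: (HG m) => -[D1 Z1] _; case: (HG m') => -[D2 Z2] _.
      * by rewrite D1 D2 addrACA.
      * by rewrite Z1 Z2 scalerDr.
    + move=> a; case: (HG m) => _ ->; case: (HG m') => _ ->.
      by rewrite /dm muD mulrDr.
  - by move=> a x m; case: (HG m) => -[].
  - move=> a x m.
    apply: ((HU _ _ (Hdm (a *: m))).2 (G (a *: m)) (fun y => a *: G m y)); first exact: HG.
    split.
    + split=> [y z|b y]; case: (HG m) => -[D1 Z1] _.
      * by rewrite D1 scalerDr.
      * by rewrite Z1 !modCZ mulrCA.
    + move=> b; case: (HG m) => _ ->.
      by rewrite /dm muZ modCZ mulrCA.
case: Htns => _ HT.
have [[U' [[UD UZ] Ut]] _] := HT _ _ Hphi.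
exists U'; split => //.
move=> b a m; rewrite Ut; case: (HG m) => -[_ Z] E.
by rewrite Z E modCZ.
Qed.
End Constr.
End KT.

Theorem mainTheorem3
  (R : comPzRingType) (A : comAlgType R) (M : lmodType A)
  (* Omega(A) with universal derivation dOm *)
  (Om : lmodType A) (dOm : A -> Om) (HOm : is_kaehler dOm)
  (* Omega(A) (x)_A M *)
  (OM : lmodType A) (tns : Om -> M -> OM) (Htns : is_tensor_product tns)
  (* S_A(M) with q_M : A -> S_A(M) and the inclusion iM of M *)
  (S : comAlgType R) (qM : A -> S) (iM : M -> S) (HS : is_symmetric_algebra qM iM)
  (* T(A) *)
  (TA : comAlgType R) (pA dA : A -> TA) (HTA : is_tangent_algebra pA dA)
  (* T(S_A(M)) *)
  (TS : comAlgType R) (pS dS : S -> TS) (HTS : is_tangent_algebra pS dS)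
  (* T^2(S_A(M)) = T(T(S_A(M))), with p_{T(S)} and d' *)
  (TTS : comAlgType R) (pT d' : TS -> TTS) (HTTS : is_tangent_algebra pT d')
  (* T(A) (x)_A S_A(M) (x)_A S_A(M) *)
  (P : comAlgType R) (j1 : TA -> P) (j2 j3 : S -> P)
  (HP : is_algebra_tensor3 pA qM qM j1 j2 j3)
  (* the module connection *)
  (nabla : M -> OM) (Hnabla : is_module_connection dOm tns nabla)
  (* T(q_M) : T(A) -> T(S_A(M)) *)
  (TqM : TA -> TS)
  (HTqM : [/\ is_alg_hom TqM, forall a, TqM (pA a) = pS (qM a)
            & forall a, TqM (dA a) = dS (qM a)])
  (* U restricted to Omega(A) (x)_A M : (b d(a)) (x) m |-> T(q_M)(b d(a)) m *)
  (U : OM -> TS)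
  (HU : (forall x y, U (x + y) = U x + U y) /\
        (forall (b a : A) (m : M),
           U (tns (b *: dOm a) m) = pS (qM b) * dS (qM a) * pS (iM m)))
  (* K_nabla *)
  (K : S -> TS)
  (HK : [/\ is_alg_hom K, forall a, K (qM a) = pS (qM a)
          & forall m, K (iM m) = dS (iM m) - U (nabla m)]) :
  forall (lam : TS -> S) (ell : TTS -> TS) (c : TTS -> TTS)
         (TK : TS -> TTS) (Tlam : TTS -> TS),
  (* lambda_M *)
  [/\ is_alg_hom lam, forall a, lam (pS (qM a)) = qM a,
      forall m, lam (pS (iM m)) = 0, forall a, lam (dS (qM a)) = 0
    & forall m, lam (dS (iM m)) = iM m] ->
  (* ell_{S_A(M)} *)
  [/\ is_alg_hom ell, forall b, ell (pT (pS b)) = pS b,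
      forall b, ell (pT (dS b)) = 0, forall b, ell (d' (pS b)) = 0
    & forall b, ell (d' (dS b)) = dS b] ->
  (* c_{S_A(M)} *)
  [/\ is_alg_hom c, forall b, c (pT (pS b)) = pT (pS b),
      forall b, c (pT (dS b)) = d' (pS b), forall b, c (d' (pS b)) = pT (dS b)
    & forall b, c (d' (dS b)) = d' (dS b)] ->
  (* T(K) *)
  [/\ is_alg_hom TK, forall x, TK (pS x) = pT (K x) & forall x, TK (dS x) = d' (K x)] ->
  (* T(lambda_M) *)
  [/\ is_alg_hom Tlam, forall y, Tlam (pT y) = pS (lam y)
    & forall y, Tlam (d' y) = dS (lam y)] ->
  (* K is a vertical connection ... *)
  [/\ forall x, lam (K x) = x,
      forall a, K (qM a) = pS (qM a),
      forall y, ell (TK y) = K (lam y)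
    & forall y, Tlam (c (TK y)) = K (lam y)] /\
  (* ... and it is effective *)
  (forall Phi : P -> TS,
     is_alg_hom Phi ->
     (forall w, Phi (j1 w) = TqM w) ->
     (forall v, Phi (j2 v) = pS v) ->
     (forall u, Phi (j3 u) = K u) ->
     bijective Phi).
Proof.
move=> lam ell c TK Tlam [Hlam lq li ldq ldi] [Hell e1 e2 e3 e4] [Hc c1 c2 c3 c4]
  [HTK TKp TKd] [HTl Tlp Tld].
have [HpS HdS _] := HTS.
have [HpT Hd' _] := HTTS.
have [HpA HdA _] := HTA.
have [Hq iD iZ _] := HS.
have [HKh Kq Ki] := HK.
have [HTq Tqp Tqd] := HTqM.
have [UD Ugen] := HU.
have [nD [_ nZ]] := Hnabla.
have Uind : forall (X : zmodType) (F1 F2 : OM -> X),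
    (forall x y, F1 (x + y) = F1 x + F1 y) -> (forall x y, F2 (x + y) = F2 x + F2 y) ->
    (forall b a m, F1 (tns (b *: dOm a) m) = F2 (tns (b *: dOm a) m)) -> forall x, F1 x = F2 x.
  move=> X F1 F2 D1 D2 G x; elim: (genOM_all HOm Htns x) => [|y z _ Hy _ Hz|b a m].
  - have Z (F : OM -> X) : (forall x y, F (x + y) = F x + F y) -> F 0 = 0.
      move=> FD; have := FD 0 0; rewrite addr0 => E.
      by apply: (addIr (F 0)); rewrite add0r -E.
    by rewrite (Z _ D1) (Z _ D2).
  - by rewrite D1 D2 Hy Hz.
  - exact: G.
have lamU : forall x, lam (U x) = 0.
  apply: (Uind _ (fun x => lam (U x)) (fun _ => 0)).
  - by move=> x y; rewrite UD (ahD _ _ Hlam).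
  - by move=> *; rewrite addr0.
  - by move=> b a m; rewrite Ugen !(ahM _ _ Hlam) ldq li !mulr0.
have K1 : forall x, lam (K x) = x.
  apply: (sym_ext HS (ah_comp HKh Hlam) (ah_id S)).
  - by move=> a; rewrite Kq lq.
  - by move=> m; rewrite Ki (ahB _ _ Hlam) ldi lamU subr0.
have ellU : forall x, ell (pT (U x)) = 0.
  apply: (Uind _ (fun x => ell (pT (U x))) (fun _ => 0)).
  - by move=> x y; rewrite UD (ahD _ _ HpT) (ahD _ _ Hell).
  - by move=> *; rewrite addr0.
  - by move=> b a m; rewrite Ugen !(ahM _ _ HpT) !(ahM _ _ Hell) e2 mulr0 mul0r.
have K3p : forall b, ell (pT (K b)) = K (lam (pS b)).
  apply: (sym_ext HS (ah_comp HKh (ah_comp HpT Hell)) (ah_comp HpS (ah_comp Hlam HKh))).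
  - by move=> a; rewrite Kq e1 lq Kq.
  - by move=> m; rewrite Ki (ahB _ _ HpT) (ahB _ _ Hell) e2 ellU subr0 li (ah0 HKh).
have ellU' : forall x, ell (d' (U x)) = U x.
  apply: (Uind _ (fun x => ell (d' (U x))) U) => //.
  - by move=> x y; rewrite UD (derD _ _ Hd') (ahD _ _ Hell).
  - move=> b a m; rewrite Ugen !(derM _ _ Hd') !(ahM _ _ HpT) !(ahD _ _ Hell) !(ahM _ _ Hell).
    rewrite ?(ahD _ _ Hell) ?(ahM _ _ Hell) ?(ahD _ _ Hell) ?(ahM _ _ Hell).
    rewrite !e1 !e2 !e3 !e4; ring.
have K3 : forall y, ell (TK y) = K (lam y).
  apply: (tan_ext HTS (ah_comp HTK Hell) (ah_comp Hlam HKh)).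
  - by move=> b; rewrite TKp K3p.
  - move=> b; rewrite TKd.
    have Hd1 : is_derivation_along (fun b => K (lam (pS b))) (fun b => ell (d' (K b))).
      apply: (der_ext K3p); exact: (der_comp (der_precomp Hd' HKh) Hell).
    have Hd2 : is_derivation_along (fun b => K (lam (pS b))) (fun b => K (lam (dS b))).
      exact: (der_comp HdS (ah_comp Hlam HKh)).
    apply: (sym_der_ext HS (ah_comp HpS (ah_comp Hlam HKh)) Hd1 Hd2).
    + by move=> a; rewrite Kq e3 ldq (ah0 HKh).
    + by move=> m; rewrite Ki (derB _ _ Hd') (ahB _ _ Hell) e4 ellU' ldi Ki.
have HTc : is_alg_hom (fun z => Tlam (c z)) := ah_comp Hc HTl.
have TcU : forall x, Tlam (c (pT (U x))) = 0.
  apply: (Uind _ (fun x => Tlam (c (pT (U x)))) (fun _ => 0)).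
  - by move=> x y; rewrite UD (ahD _ _ HpT) (ahD _ _ HTc).
  - by move=> *; rewrite addr0.
  - by move=> b a m; rewrite Ugen !(ahM _ _ HpT) !(ahM _ _ HTc) !c1 !Tlp li (ah0 HpS) mulr0.
have K4p : forall b, Tlam (c (pT (K b))) = K (lam (pS b)).
  apply: (sym_ext HS (ah_comp HKh (ah_comp HpT HTc)) (ah_comp HpS (ah_comp Hlam HKh))).
  - by move=> a; rewrite Kq c1 Tlp lq Kq.
  - by move=> m; rewrite Ki (ahB _ _ HpT) (ahB _ _ HTc) TcU subr0 c2 Tld li (der0 HdS) (ah0 HKh).
have TcU' : forall x, Tlam (c (d' (U x))) = U x.
  apply: (Uind _ (fun x => Tlam (c (d' (U x)))) U) => //.
  - by move=> x y; rewrite UD (derD _ _ Hd') (ahD _ _ HTc).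
  - move=> b a m; rewrite Ugen !(derM _ _ Hd') !(ahM _ _ HpT).
    rewrite ?(ahD _ _ HTc) ?(ahM _ _ HTc) ?(ahD _ _ HTc) ?(ahM _ _ HTc).
    rewrite !c1 !c2 !c3 !c4 !Tlp !Tld !lq !ldq !li !ldi (ah0 HpS) (der0 HdS); ring.
have K4 : forall y, Tlam (c (TK y)) = K (lam y).
  apply: (tan_ext HTS (ah_comp HTK HTc) (ah_comp Hlam HKh)).
  - by move=> b; rewrite TKp K4p.
  - move=> b; rewrite TKd.
    have Hd1 : is_derivation_along (fun b => K (lam (pS b))) (fun b => Tlam (c (d' (K b)))).
      apply: (der_ext K4p); exact: (der_comp (der_precomp Hd' HKh) HTc).
    have Hd2 : is_derivation_along (fun b => K (lam (pS b))) (fun b => K (lam (dS b))).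
      exact: (der_comp HdS (ah_comp Hlam HKh)).
    apply: (sym_der_ext HS (ah_comp HpS (ah_comp Hlam HKh)) Hd1 Hd2).
    + by move=> a; rewrite Kq c3 Tlp ldq (ah0 HpS) (ah0 HKh).
    + by move=> m; rewrite Ki (derB _ _ Hd') (ahB _ _ HTc) c4 Tld TcU' ldi Ki.
split; first by split.
move=> Phi HPhi Ph1 Ph2 Ph3.
have [[Hj1 [Hj2 Hj3]] c12 c23 HPU] := HP.
have Hh : is_alg_hom (fun a => j2 (qM a)) := ah_comp Hq Hj2.
pose h := AHom Hh.
have Hdel : is_derivation_along h (fun a => j1 (dA a)).
  by apply: (der_ext c12); exact: (der_comp HdA Hj1).
have muD : forall m m', j2 (iM (m + m')) = j2 (iM m) + j2 (iM m').
  by move=> m m'; rewrite iD (ahD _ _ Hj2).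
have muZ : forall a m, j2 (iM (a *: m)) = h a * j2 (iM m).
  by move=> a m; rewrite iZ (ahM _ _ Hj2).
have [U' [U'D U'Z U'gen]] := Uconstr HOm Htns Hdel muD muZ.
have mu1D : forall m m', j3 (iM (m + m')) + U' (nabla (m + m')) =
    (j3 (iM m) + U' (nabla m)) + (j3 (iM m') + U' (nabla m')).
  by move=> m m'; rewrite iD (ahD _ _ Hj3) nD U'D addrACA.
have mu1Z : forall a m, j3 (iM (a *: m)) + U' (nabla (a *: m)) =
    h a * (j3 (iM m) + U' (nabla m)) + j1 (dA a) * j2 (iM m).
  move=> a m; rewrite iZ (ahM _ _ Hj3) nZ U'D U'Z -[dOm a]scale1r U'gen /= -c23.
  by rewrite (ah1 Hq) (ah1 Hj2); ring.
have [h0 [D [Hh0 HD [h0q Dq] h0i Di]]] :=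
  sym_der_exists HS Hh Hdel muD mu1D muZ mu1Z.
have h0E : forall x, h0 x = j2 x.
  apply: (sym_ext HS Hh0 Hj2) => [a|m]; by rewrite ?h0q ?h0i.
have HD2 : is_derivation_along j2 D := der_ext h0E HD.
have [[Psi [HPsi Psip Psid]] _] := (let: And3 _ _ U0 := HTS in U0) P j2 D Hj2 HD2.
have PsiU : forall x, Psi (U x) = U' x.
  apply: (Uind _ (fun x => Psi (U x)) U') => //.
  - by move=> x y; rewrite UD (ahD _ _ HPsi).
  - by move=> b a m; rewrite Ugen !(ahM _ _ HPsi) !Psip Psid Dq U'gen /= mulrA.
have PhiU : forall x, Phi (U' x) = U x.
  apply: (Uind _ (fun x => Phi (U' x)) U) => //.
  - by move=> x y; rewrite U'D (ahD _ _ HPhi).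
  - by move=> b a m; rewrite Ugen U'gen /= !(ahM _ _ HPhi) !Ph2 Ph1 Tqd mulrA.
exists Psi.
- have E1 : forall w, Psi (Phi (j1 w)) = j1 w.
    apply: (tan_ext HTA (ah_comp Hj1 (ah_comp HPhi HPsi)) Hj1) => a.
    + by rewrite Ph1 Tqp Psip c12.
    + by rewrite Ph1 Tqd Psid Dq.
  have E2 : forall v, Psi (Phi (j2 v)) = j2 v by move=> v; rewrite Ph2 Psip.
  have E3 : forall u, Psi (Phi (j3 u)) = j3 u.
    apply: (sym_ext HS (ah_comp Hj3 (ah_comp HPhi HPsi)) Hj3) => [a|m].
    + by rewrite Ph3 Kq Psip c23.
    + by rewrite Ph3 Ki (ahB _ _ HPsi) Psid Di PsiU addrK.
  have [_ Un] := HPU P j1 j2 j3 Hj1 Hj2 Hj3 c12 c23.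
  move=> z; apply: (Un (fun z => Psi (Phi z)) id); split=> //; exact: ah_comp HPhi HPsi.
- apply: (tan_ext HTS (ah_comp HPsi HPhi) (ah_id TS)) => b.
  + by rewrite Psip Ph2.
  + rewrite Psid.
    have Hd1 : is_derivation_along pS (fun b => Phi (D b)).
      by apply: (der_ext Ph2); exact: (der_comp HD2 HPhi).
    apply: (sym_der_ext HS HpS Hd1 HdS) => [a|m].
    * by rewrite Dq Ph1 Tqd.
    * by rewrite Di (ahD _ _ HPhi) Ph3 Ki PhiU subrK.
Qed.
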